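(* Let $\mathcal{X}\subseteq\mathbb{R}^m$ be countable and let $\widehat\nu = \sum_{j=1}^N\widehat\nu_j\delta_{\widehat x_j}$ be a probability mass function supported on $N$ distinct points $\widehat x_1,\dots,\widehat x_N\in\mathcal{X}$ with $\widehat\nu_j>0$ and $\sum_j\widehat\nu_j = 1$. Let $f:\mathbb{R}\to\mathbb{R}$ be convex with $f(1)=0$, and for $\varepsilon\ge0$ let $\mathbb{B}_f(\widehat\nu,\varepsilon) = \{\nu\in\mathcal{M}(\mathcal{X}) : D_f(\widehat\nu\parallel\nu)\le\varepsilon\}$. Then for any $\varepsilon\ge0$ and $x\in\mathcal{X}$ there exists $\nu^\star_f\in\mathbb{B}_f(\widehat\nu,\varepsilon)$ with $\sup_{\nu\in\mathbb{B}_f(\widehat\nu,\varepsilon)}\nu(x) = \nu^\star_f(x)$. Moreover, $\nu^\star_f$ is supported on at most $N+1$ points and $\mathrm{supp}(\nu^\star_f)\subseteq\mathrm{supp}(\widehat\nu)\cup\{x\}$.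
   Context: $\mathcal{M}(\mathcal{X})$ is the set of probability mass functions on $\mathcal{X}$. The $f$-divergence between $\nu_1,\nu_2\in\mathcal{M}(\mathcal{X})$ is $D_f(\nu_1\parallel\nu_2) = \sum_{z\in\mathcal{X}} f(\nu_1(z)/\nu_2(z))\,\nu_2(z)$. *)

(* Defs.v *)
From HB Require Import structures.
From mathcomp Require Import all_boot all_order all_algebra.
From mathcomp Require Import all_classical all_reals all_analysis.
Set Implicit Arguments. Unset Strict Implicit. Unset Printing Implicit Defensive.
Import Order.TTheory GRing.Theory Num.Theory.
Import numFieldNormedType.Exports.
Local Open Scope classical_set_scope.
Local Open Scope ring_scope.

Definition convex_fun (R : realType) (f : R -> R) : Prop :=
  forall (x y t : R), 0 <= t -> t <= 1 ->
    f (t * x + (1 - t) * y) <= t * f x + (1 - t) * f y.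

Definition is_pmf (R : realType) (m : nat) (X : set 'rV[R]_m)
  (nu : 'rV[R]_m -> R) : Prop :=
  (forall z, 0 <= nu z) /\ (forall z, ~ X z -> nu z = 0) /\
  (\esum_(z in X) (nu z)%:E = 1%E).

(* Recession slope f'(oo) = lim_{t -> +oo} f(t)/t, in the extended reals. *)
Definition f_infty (R : realType) (f : R -> R) : \bar R :=
  lim ((f t / t)%:E @[t --> +oo]).

(* Perspective term  b * f(a/b)  with the standard conventions
   0 * f(0/0) = 0  and  0 * f(a/0) = a * f'(oo)  for a > 0. *)
Definition fterm (R : realType) (f : R -> R) (a b : R) : \bar R :=
  if 0 < b then (b * f (a / b))%:E
  else if a == 0 then 0%E else (a%:E * f_infty f)%E.

(* D_f(nu1 || nu2) = sum_{z in X} f(nu1 z / nu2 z) nu2 z, the (possibly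
   signed) series being the sum of the positive parts minus the sum of the
   negative parts. *)
Definition fdiv (R : realType) (m : nat) (X : set 'rV[R]_m) (f : R -> R)
  (nu1 nu2 : 'rV[R]_m -> R) : \bar R :=
  (\esum_(z in X) maxe (fterm f (nu1 z) (nu2 z)) 0
   - \esum_(z in X) maxe (- fterm f (nu1 z) (nu2 z)) 0)%E.

Definition fball (R : realType) (m : nat) (X : set 'rV[R]_m) (f : R -> R)
  (nuhat : 'rV[R]_m -> R) (eps : R) : set ('rV[R]_m -> R) :=
  [set nu | is_pmf X nu /\ (fdiv X f nuhat nu <= eps%:E)%E].

Definition empirical (R : realType) (m N : nat) (xhat : 'I_N -> 'rV[R]_m)
  (w : 'I_N -> R) : 'rV[R]_m -> R :=
  fun z => \sum_(j < N | xhat j == z) w j.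

(* Main.v *)
Require Import Defs.
From HB Require Import structures.
From mathcomp Require Import all_boot all_order all_algebra.
From mathcomp Require Import all_classical all_reals all_analysis.
From mathcomp Require Import ring lra.
Import Order.TTheory GRing.Theory Num.Theory.
Import numFieldNormedType.Exports.
Local Open Scope classical_set_scope.
Local Open Scope ring_scope.

Lemma inv_cvg0 (R : realType) : (fun t : R => t^-1) @ +oo --> (0:R).
Proof.
apply/cvgrVy.
  near=> t; rewrite invr_gt0; near: t; exact: nbhs_pinfty_gt.
have -> : unstable.inv_fun (fun t : R => t^-1) = id.
  by apply: funext => t /=; rewrite /unstable.inv_fun invrK.
exact: cvg_id.
Unshelve. all: by end_near.
Qed.

Section finf.
Variables (R : realType) (f : R -> R).
Hypothesis fc : convex_fun f.

Lemma conv3 u v y : u < v -> v < y ->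
  (y - u) * f v <= (y - v) * f u + (v - u) * f y.
Proof.
move=> uv vy.
have yu : 0 < y - u by lra.
pose t := (y - v) / (y - u).
have t0 : 0 <= t by rewrite /t divr_ge0 //; lra.
have t1 : t <= 1 by rewrite /t ler_pdivrMr //; lra.
have := @fc u y t t0 t1.
have -> : t * u + (1 - t) * y = v.
  rewrite /t; field; lra.
move=> h.
have := ler_wpM2l (ltW yu) h.
have -> : (y - u) * (t * f u + (1 - t) * f y) = (y - v) * f u + (v - u) * f y.
  rewrite /t; field; lra.
by [].
Qed.

Lemma slope0_mono p q : 0 < p -> p <= q -> (f p - f 0) / p <= (f q - f 0) / q.
Proof.
move=> p0 pq.
have [->|pq'] := eqVneq p q; first by [].
have pq2 : p < q by rewrite lt_neqAle pq' pq.
have := @conv3 0 p q p0 pq2.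
rewrite ler_pdivrMr // mulrAC ler_pdivlMr; last by lra.
nra.
Qed.

Lemma subgrad s0 : exists m, forall y, f s0 + m * (y - s0) <= f y.
Proof.
pose E := [set (f s0 - f u) / (s0 - u) | u in [set u | u < s0]].
have ub : ubound E (f (s0 + 1) - f s0).
  move=> _ [u /= us <-].
  rewrite ler_pdivrMr; last by lra.
  have := @conv3 u s0 (s0 + 1) us ltac:(lra).
  nra.
have hs : has_sup E.
  split; first by exists ((f s0 - f (s0 - 1)) / (s0 - (s0 - 1))), (s0 - 1) => //=; lra.
  by exists (f (s0 + 1) - f s0).
exists (sup E) => y.
have [ys|sy|->] := ltgtP y s0.
- have := sup_upper_bound hs (ex_intro2 _ _ y ys erefl).
  rewrite ler_pdivrMr; last by lra.
  nra.
- have : sup E <= (f y - f s0) / (y - s0).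
    apply: ge_sup; first by exists ((f s0 - f (s0 - 1)) / (s0 - (s0 - 1))), (s0 - 1) => //=; lra.
    move=> _ [u /= us <-].
    rewrite ler_pdivrMr; last by lra.
    rewrite mulrAC ler_pdivlMr; last by lra.
    have := @conv3 u s0 y us sy.
    nra.
  rewrite ler_pdivlMr; last by lra.
  nra.
- by rewrite subrr mulr0 addr0.
Qed.

Let Gs (r : R) : \bar R := ((f (Num.max r 1) - f 0) / Num.max r 1)%:E.

Lemma Gs_nd : {homo Gs : n m / n <= m >-> (n <= m)%E}.
Proof.
move=> n m nm; rewrite /Gs lee_fin; apply: slope0_mono.
  by rewrite lt_max ltr01 orbT.
by rewrite ge_max !le_max nm lexx /= orbT.
Qed.

Lemma finf_cvg : (f t / t)%:E @[t --> +oo] --> f_infty f.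
Proof.
suff h : (f t / t)%:E @[t --> +oo] --> (ereal_sup (range Gs) + 0)%E.
  by rewrite /f_infty (cvg_lim _ h).
have h0 : (f 0 / t)%:E @[t --> +oo] --> (0%E : \bar R).
  apply: cvg_EFin; first by near=> t.
  have := cvgM (cvg_cst (f 0)) (@inv_cvg0 R); rewrite mulr0.
  move=> H; exact: H.
have hd : (ereal_sup (range Gs) +? 0)%E by rewrite fin_num_adde_defl.
have hh := cvgeD hd (nondecreasing_cvge Gs_nd) h0.
rewrite adde0 in hh; rewrite adde0.
have e : {near +oo, (fun t => (Gs t + (f 0 / t)%:E)%E) =1 (fun t => (f t / t)%:E)}.
  near=> t.
  have t1 : 1 <= t by near: t; apply: nbhs_pinfty_ge.
  rewrite /Gs /= (max_l t1) -EFinD; congr (_%:E).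
  rewrite -mulrDl; congr (_ * _); lra.
exact: (cvg_trans (near_eq_cvg e) (hh _)).
Unshelve. all: by end_near.
Qed.


Lemma finf_ge (m K : R) : (forall t, 1 <= t -> m * t + K <= f t) ->
  (m%:E <= f_infty f)%E.
Proof.
move=> H; apply/lee_subgt0Pr => e e0.
apply: (cvge_ge _ (finf_cvg)).
near=> t.
have t1 : 1 <= t by near: t; apply: nbhs_pinfty_ge.
have tK : `|K| / e <= t by near: t; apply: nbhs_pinfty_ge; exact: num_real.
rewrite -EFinB lee_fin ler_pdivlMr; last by lra.
have := H t t1.
rewrite ler_pdivrMr // in tK.
have := ler_norm (- K); rewrite normrN.
nra.
Unshelve. all: by end_near.
Qed.

Lemma finf_le (B K A : R) : (forall t, A <= t -> f t <= B * t + K) ->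
  (f_infty f <= B%:E)%E.
Proof.
move=> H; apply/lee_addgt0Pr => e e0.
apply: (cvge_le _ (finf_cvg)).
near=> t.
have t1 : 1 <= t by near: t; apply: nbhs_pinfty_ge.
have tA : A <= t by near: t; apply: nbhs_pinfty_ge; exact: num_real.
have tK : `|K| / e <= t by near: t; apply: nbhs_pinfty_ge; exact: num_real.
rewrite -EFinD lee_fin ler_pdivrMr; last by lra.
have := H t tA.
rewrite ler_pdivrMr // in tK.
have := ler_norm K.
nra.
Unshelve. all: by end_near.
Qed.

End finf.

Lemma esum_seq (R : realType) (T : choiceType) (Y : set T) (r : seq T)
  (h : T -> \bar R) : uniq r -> (forall z, z \in r -> Y z) ->
  (forall z, (0 <= h z)%E) ->
  \esum_(z in Y `&` [set z | z \in r]) h z = \sum_(z <- r) h z.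
Proof.
move=> ur rY h0.
have -> : Y `&` [set z | z \in r] = [set` r].
  apply/seteqP; split => z /=. by case. move=> zr; split => //; exact: rY.
rewrite esum_fset; last by move=> i _; exact: h0.
  by rewrite -fsbig_seq.
exact: finite_seq.
Qed.


Lemma esumZr (R : realType) (T : choiceType) (Y : set T) (h : T -> R) (k : R) :
  0 <= k -> (forall z, 0 <= h z) ->
  \esum_(z in Y) (k * h z)%:E = (k%:E * \esum_(z in Y) (h z)%:E)%E.
Proof.
move=> k0 h0; rewrite /esum -ereal_supZl //; last first.
  apply/set0P; exists 0%E; exists set0; first exact: fsets_set0.
  by rewrite fsbig_set0.
congr ereal_sup; apply/seteqP; split => y /=.
  move=> [A hA <-]; exists (\sum_(z \in A) (h z)%:E); first by exists A.
  rewrite ge0_mule_fsumr; last by move=> i; rewrite lee_fin.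
  by apply: eq_fsbigr => i _; rewrite EFinM.
move=> [z [A hA <-] <-]; exists A => //.
rewrite ge0_mule_fsumr; last by move=> i; rewrite lee_fin.
by apply: eq_fsbigr => i _; rewrite EFinM.
Qed.

Lemma maxr_diff (R : realType) (r : R) : Num.max r 0 - Num.max (- r) 0 = r.
Proof.
rewrite !maxEle; case: ifPn => h1; case: ifPn => h2; rewrite -?ltNge in h1 h2; lra.
Qed.
Lemma maxe_diff (R : realType) (y : \bar R) : y != -oo%E ->
  (maxe y 0 - maxe (- y) 0)%E = y.
Proof.
case: y => [r| |] //= _.
  by rewrite -!EFin_max -EFinB maxr_diff.
by rewrite (max_l (leey _)) (max_r (leNye _)) sube0.
Qed.

Section basics.
Variables (R : realType) (m N : nat) (X : set 'rV[R]_m)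
  (xhat : 'I_N -> 'rV[R]_m) (w : 'I_N -> R) (x : 'rV[R]_m) (f : R -> R).
Hypothesis fc : convex_fun f.
Hypothesis f1 : f 1 = 0.
Hypotheses (xinj : injective xhat) (Xxh : forall j, X (xhat j))
  (w0 : forall j, 0 < w j) (w1 : \sum_(j < N) w j = 1) (Xx : X x).

Definition sS := undup (x :: [seq xhat j | j <- enum 'I_N]).
Local Notation a := (empirical xhat w).

Lemma a_xhat j : a (xhat j) = w j.
Proof.
rewrite /empirical (big_pred1 j) // => i /=.
by rewrite (inj_eq xinj).
Qed.

Lemma a_out z : (forall j, xhat j != z) -> a z = 0.
Proof. by move=> h; rewrite /empirical big1 // => j; rewrite (negbTE (h j)). Qed.

Lemma a_ge0 z : 0 <= a z.
Proof. by rewrite /empirical sumr_ge0 // => j _; exact: ltW. Qed.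

Lemma sS_uniq : uniq sS.
Proof. exact: undup_uniq. Qed.

Lemma x_in_sS : x \in sS.
Proof. by rewrite mem_undup mem_head. Qed.

Lemma xhat_in_sS j : xhat j \in sS.
Proof. by rewrite mem_undup in_cons; apply/orP; right; apply: map_f; rewrite mem_enum. Qed.

Lemma sS_X z : z \in sS -> X z.
Proof.
rewrite mem_undup in_cons => /orP[/eqP -> //|/mapP [j _ ->]]; exact: Xxh.
Qed.

Lemma size_sS : (size sS <= N.+1)%N.
Proof.
apply: (leq_trans (size_undup _)).
by rewrite /= size_map size_enum_ord.
Qed.

Lemma sS_cases z : z \in sS -> z = x \/ exists j, z = xhat j.
Proof.
rewrite mem_undup in_cons => /orP[/eqP ->|/mapP [j _ ->]]; [by left|by right; exists j].
Qed.

Lemma a_supp z : a z != 0 -> z \in sS.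
Proof.
apply: contraR => zn; rewrite a_out // => j; apply: contraNneq zn => <-.
exact: xhat_in_sS.
Qed.

Lemma sum_sS_a : \sum_(z <- sS) a z = 1.
Proof.
rewrite /empirical.
under eq_bigr do rewrite big_mkcond /=.
rewrite exchange_big /= -w1; apply: eq_bigr => j _.
rewrite -big_mkcond /=.
under eq_bigl do rewrite eq_sym.
rewrite -big_filter.
have -> : [seq i <- sS | i == xhat j] = [:: xhat j].
  rewrite filter_pred1_uniq //; [exact: sS_uniq|exact: xhat_in_sS].
by rewrite big_seq1.
Qed.

Lemma sum_sS_ge (h : 'rV[R]_m -> R) z : (forall y, 0 <= h y) -> z \in sS ->
  h z <= \sum_(y <- sS) h y.
Proof.
move=> h0 zs; rewrite (bigD1_seq z) //=; last exact: sS_uniq.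
by rewrite lerDl sumr_ge0.
Qed.

Lemma a_le1 z : a z <= 1.
Proof.
have [/eqP ->|/a_supp zs] := boolP (a z == 0); first by rewrite ler01.
by rewrite -sum_sS_a; apply: sum_sS_ge => //; exact: a_ge0.
Qed.


Lemma finf_neqNy : f_infty f != -oo%E.
Proof.
have [k hm] := @subgrad R f fc 1.
have : (k%:E <= f_infty f)%E.
  apply: (@finf_ge _ _ fc k (f 1 - k)) => t _.
  have := hm t; lra.
by case: (f_infty f).
Qed.

Lemma fterm_neqNy p q : 0 <= p -> fterm f p q != -oo%E.
Proof.
move=> p0; rewrite /fterm; case: ifP => // _; case: ifP => // /negbT p00.
have pp : 0 < p by rewrite lt_neqAle eq_sym p00 p0.
have := finf_neqNy; case: (f_infty f) => [r| |] //= _.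
by rewrite muleC gt0_mulye.
Qed.

Lemma maxeN_fin (y : \bar R) : y != -oo%E -> maxe (- y)%E 0 \is a fin_num.
Proof.
case: y => [q| |] //= _; first by rewrite maxEle; case: ifP.
by rewrite maxEle leNye.
Qed.

Lemma sum_maxe_diff (r : seq 'rV[R]_m) (F : 'rV[R]_m -> \bar R) :
  (forall i, F i != -oo%E) ->
  (\sum_(i <- r) maxe (F i) 0 - \sum_(i <- r) maxe (- F i) 0)%E = \sum_(i <- r) F i.
Proof.
move=> hF; elim: r => [|i r IH]; first by rewrite !big_nil sube0.
have fin1 : maxe (- F i)%E 0 \is a fin_num by exact: maxeN_fin.
have finr : \sum_(j <- r) maxe (- F j)%E 0 \is a fin_num.
  by apply/sum_fin_numP => j _ _; exact: maxeN_fin.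
rewrite !big_cons fin_num_oppeD // addeACA maxe_diff // IH //.
Qed.


Lemma pmf_rest {nu : 'rV[R]_m -> R} : is_pmf X nu ->
  \esum_(z in X `&` ~` [set z | z \in sS]) (nu z)%:E = (1 - \sum_(z <- sS) nu z)%:E.
Proof.
case=> nu0 [nuX nu1].
move: nu1; rewrite (esumID [set z | z \in sS]); last by move=> i _; rewrite lee_fin.
rewrite esum_seq; [|exact: sS_uniq|exact: sS_X|by move=> z; rewrite lee_fin].
rewrite sumEFin.
have : (0 <= \esum_(z in X `&` ~` [set z | z \in sS]) (nu z)%:E)%E.
  by apply: esum_ge0 => z _; rewrite lee_fin.
move: (\esum_(z in X `&` ~` [set z | z \in sS]) (nu z)%:E) => E2.
case: E2 => [r| |] // _ h.
  move: h; rewrite -EFinD => -[h]; congr (_%:E); lra.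
Qed.

Lemma pmf_sum_le1 {nu : 'rV[R]_m -> R} : is_pmf X nu -> \sum_(z <- sS) nu z <= 1.
Proof.
move=> hnu; have := pmf_rest hnu.
have : (0 <= \esum_(z in X `&` ~` [set z | z \in sS]) (nu z)%:E)%E.
  by apply: esum_ge0 => z _; rewrite lee_fin; case: hnu.
move=> + h; rewrite h lee_fin; lra.
Qed.

Lemma pmf_le1 {nu : 'rV[R]_m -> R} z : is_pmf X nu -> nu z <= 1.
Proof.
move=> hnu; have [nu0 [nuX _]] := hnu.
have [zs|zs] := boolP (z \in sS).
  exact: le_trans (sum_sS_ge _ _ nu0 zs) (pmf_sum_le1 hnu).
have [Xz|nXz] := pselect (X z); last by rewrite nuX.
have := pmf_rest hnu.
move=> h.
have : ((nu z)%:E <= \esum_(z in X `&` ~` [set z | z \in sS]) (nu z)%:E)%E.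
  apply: esum_ge; exists [set z]; last by rewrite fsbig_set1.
  split; first exact: finite_set1.
  by move=> y /= ->; split => //; apply/negP.
rewrite h lee_fin.
have : 0 <= \sum_(y <- sS) nu y by apply: sumr_ge0 => y _; exact: nu0.
lra.
Qed.

Lemma maxr_pM (k p : R) : 0 <= p -> Num.max (p * k) 0 = Num.max k 0 * p.
Proof.
move=> p0; rewrite !maxEle; case: ifPn => h1; case: ifPn => h2; rewrite -?ltNge in h1 h2; nra.
Qed.

Lemma Dsplit {nu : 'rV[R]_m -> R} : is_pmf X nu ->
  fdiv X f a nu = (\sum_(z <- sS) fterm f (a z) (nu z)
     + (f 0 * (1 - \sum_(z <- sS) nu z))%:E)%E.
Proof.
move=> hnu; have [nu0 [nuX nu1]] := hnu.
have hrest := pmf_rest hnu.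
have Tz z : (X `&` ~` [set z | z \in sS]) z -> fterm f (a z) (nu z) = (nu z * f 0)%:E.
  move=> [_ zs].
  have az : a z = 0.
    apply/eqP; apply/negPn; apply/negP => /a_supp h; exact: zs h.
  rewrite /fterm az; case: ifPn => nz; first by rewrite mul0r.
  have -> : nu z = 0 by apply/eqP; rewrite eq_le nu0 andbT leNgt.
  by rewrite eqxx mul0r.
rewrite /fdiv.
rewrite (esumID [set z | z \in sS] X (fun z => maxe (fterm f (a z) (nu z)) 0)); last first.
  by move=> i _; rewrite le_max lexx orbT.
rewrite (esumID [set z | z \in sS] X (fun z => maxe (- fterm f (a z) (nu z))%E 0)); last first.
  by move=> i _; rewrite le_max lexx orbT.
rewrite !esum_seq; try (exact: sS_uniq); try (exact: sS_X); try (by move=> i; rewrite le_max lexx orbT).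
have -> : \esum_(i in X `&` ~` [set z | z \in sS]) maxe (fterm f (a i) (nu i)) 0
    = \esum_(i in X `&` ~` [set z | z \in sS]) (Num.max (f 0) 0 * nu i)%:E.
  by apply: eq_esum => z zT; rewrite (Tz z zT) -EFin_max maxr_pM.
have -> : \esum_(i in X `&` ~` [set z | z \in sS]) maxe (- fterm f (a i) (nu i))%E 0
    = \esum_(i in X `&` ~` [set z | z \in sS]) (Num.max (- f 0) 0 * nu i)%:E.
  by apply: eq_esum => z zT; rewrite (Tz z zT) -EFinN -EFin_max -mulrN maxr_pM.
rewrite !esumZr ?le_max ?lexx ?orbT // hrest -!EFinM.
rewrite fin_num_oppeD // addeACA sum_maxe_diff; last by move=> i; apply: fterm_neqNy; exact: a_ge0.
congr (_ + _)%E; rewrite -EFinB; congr (_%:E).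
by rewrite -mulrBl maxr_diff.
Qed.


Definition nul (l : R) (z : 'rV[R]_m) : R := l * a z + (1 - l) * (z == x)%:R.
Definition Gp (p q : R) : R := q * f (p / q).
Definition psi (l : R) : R := \sum_(z <- sS) Gp (a z) (nul l z).

Lemma sum_sS_split (h : 'rV[R]_m -> R) :
  \sum_(z <- sS) h z = h x + \sum_(z <- sS | z != x) h z.
Proof. by rewrite (bigD1_seq x) //; [exact: x_in_sS|exact: sS_uniq]. Qed.

Lemma sume_sS_split (h : 'rV[R]_m -> \bar R) :
  \sum_(z <- sS) h z = (h x + \sum_(z <- sS | z != x) h z)%E.
Proof. by rewrite (bigD1_seq x) //; [exact: x_in_sS|exact: sS_uniq]. Qed.

Lemma sum_a_nx : \sum_(z <- sS | z != x) a z = 1 - a x.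
Proof. have := sum_sS_a; rewrite sum_sS_split; lra. Qed.

Lemma nul_x l : nul l x = l * a x + (1 - l).
Proof. by rewrite /nul eqxx mulr1. Qed.

Lemma nul_nx l z : z != x -> nul l z = l * a z.
Proof. by move=> /negbTE zx; rewrite /nul zx mulr0 addr0. Qed.

Lemma nul_ge0 l z : 0 <= l <= 1 -> 0 <= nul l z.
Proof.
move=> /andP[l0 l1]; rewrite /nul addr_ge0 //.
  by rewrite mulr_ge0 //; exact: a_ge0.
by rewrite mulr_ge0 ?subr_ge0 //; case: (z == x).
Qed.

Lemma nul_ge_la l z : 0 <= l <= 1 -> l * a z <= nul l z.
Proof.
move=> /andP[l0 l1]; rewrite /nul lerDl.
by rewrite mulr_ge0 ?subr_ge0 //; case: (z == x).
Qed.

Lemma sum_nul l : \sum_(z <- sS) nul l z = 1.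
Proof.
rewrite sum_sS_split nul_x (eq_bigr (fun z => l * a z)); last first.
  by move=> z zx; rewrite nul_nx.
rewrite -mulr_sumr sum_a_nx; ring.
Qed.

Lemma nul_out l z : z \notin sS -> nul l z = 0.
Proof.
move=> zs; have zx : z != x by apply: contraNneq zs => ->; exact: x_in_sS.
rewrite nul_nx // (_ : a z = 0) ?mulr0 //.
by apply/eqP; apply: contraNT zs; exact: a_supp.
Qed.

Lemma nul_pmf l : 0 <= l <= 1 -> is_pmf X (nul l).
Proof.
move=> hl; split; first by move=> z; exact: nul_ge0.
split.
  move=> z nXz; apply: nul_out; apply: contra_notN nXz; exact: sS_X.
rewrite (esumID [set z | z \in sS]); last by move=> i _; rewrite lee_fin nul_ge0.
rewrite esum_seq; [|exact: sS_uniq|exact: sS_X|by move=> z; rewrite lee_fin nul_ge0].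
rewrite esum1 ?adde0; last by move=> z [_ zs]; rewrite nul_out //; apply/negP.
by rewrite sumEFin sum_nul.
Qed.

Lemma fterm_G p q : 0 <= q -> (0 < q \/ p = 0) -> fterm f p q = (Gp p q)%:E.
Proof.
move=> q0 [qp|->]; first by rewrite /fterm qp.
rewrite /fterm /Gp; case: ifPn => qp; first by rewrite mul0r.
rewrite eqxx.
have -> : q = 0 by apply/eqP; rewrite eq_le q0 andbT leNgt.
by rewrite mul0r.
Qed.


Lemma nul_pos l z : 0 < l <= 1 -> a z != 0 -> 0 < nul l z.
Proof.
move=> /andP[l0 l1] az.
have azp : 0 < a z by rewrite lt_neqAle eq_sym az a_ge0.
have hl : 0 <= l <= 1 by rewrite (ltW l0) l1.
exact: lt_le_trans (mulr_gt0 l0 azp) (nul_ge_la l z hl).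
Qed.

Lemma D_nul l : 0 < l <= 1 -> fdiv X f a (nul l) = (psi l)%:E.
Proof.
move=> hl; have hl' : 0 <= l <= 1 by case/andP: hl => /ltW -> ->.
rewrite (Dsplit (nul_pmf _ hl')) sum_nul subrr mulr0 adde0 /psi -sumEFin.
apply: eq_bigr => z _; apply: fterm_G; first exact: nul_ge0.
have [az|az] := eqVneq (a z) 0; [by right|left; exact: nul_pos].
Qed.

Lemma D_nul0 : fdiv X f a (nul 0) = ((f (a x))%:E + (1 - a x)%:E * f_infty f)%E.
Proof.
have h0 : 0 <= (0:R) <= 1 by rewrite lexx ler01.
rewrite (Dsplit (nul_pmf _ h0)) sum_nul subrr mulr0 adde0 sume_sS_split.
congr (_ + _)%E.
  by rewrite nul_x mul0r add0r subr0 /fterm ltr01 divr1 mul1r.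
rewrite -sum_a_nx -sumEFin ge0_sume_distrl; last by move=> z _; rewrite lee_fin a_ge0.
apply: eq_bigr => z zx; rewrite nul_nx // mul0r /fterm ltxx.
by case: eqP => [->|//]; rewrite mul0e.
Qed.

Lemma Gp_conv p b1 b2 t : (p = 0 \/ (0 < b1 /\ 0 < b2)) -> 0 <= t <= 1 ->
  Gp p (t * b1 + (1 - t) * b2) <= t * Gp p b1 + (1 - t) * Gp p b2.
Proof.
move=> [->|[b10 b20]] /andP[t0 t1].
  rewrite /Gp !mul0r le_eqVlt; apply/orP; left; apply/eqP; ring.
have B0 : 0 < t * b1 + (1 - t) * b2 by nra.
pose mu := t * b1 / (t * b1 + (1 - t) * b2).
have mu0 : 0 <= mu by rewrite /mu divr_ge0 //; [nra|exact: ltW].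
have mu1 : mu <= 1 by rewrite /mu ler_pdivrMr //; nra.
have := @fc (p / b1) (p / b2) mu mu0 mu1.
have -> : mu * (p / b1) + (1 - mu) * (p / b2) = p / (t * b1 + (1 - t) * b2).
  rewrite /mu; field; apply/and3P; split; apply/negP => /eqP; lra.
move=> h; have := ler_wpM2l (ltW B0) h.
rewrite /Gp.
have -> : (t * b1 + (1 - t) * b2) * (mu * f (p / b1) + (1 - mu) * f (p / b2))
   = t * (b1 * f (p / b1)) + (1 - t) * (b2 * f (p / b2)).
  rewrite /mu; field; apply/negP => /eqP; lra.
by [].
Qed.

Lemma psi_conv p q t : 0 < p <= 1 -> 0 < q <= 1 -> 0 <= t <= 1 ->
  psi (t * p + (1 - t) * q) <= t * psi p + (1 - t) * psi q.
Proof.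
move=> hp hq ht.
rewrite /psi !mulr_sumr -big_split /=; apply: ler_sum => z _.
have -> : nul (t * p + (1 - t) * q) z = t * nul p z + (1 - t) * nul q z.
  by rewrite /nul; ring.
apply: Gp_conv => //.
have [az|az] := eqVneq (a z) 0; [by left|right; split; exact: nul_pos].
Qed.


Lemma sum_seq_ge (r : seq 'rV[R]_m) (h : 'rV[R]_m -> R) z : uniq r ->
  (forall y, 0 <= h y) -> z \in r -> h z <= \sum_(y <- r) h y.
Proof.
move=> ur h0 zs; rewrite (bigD1_seq z) //=.
by rewrite lerDl sumr_ge0.
Qed.

Lemma Gp_lin l p : 0 < l -> Gp p (l * p) = p * (l * f l^-1).
Proof.
move=> l0; rewrite /Gp.
have [->|p0] := eqVneq p 0; first by rewrite !(mulr0, mul0r).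
have -> : p / (l * p) = l^-1 by field; apply/andP; split => //; rewrite gt_eqF.
ring.
Qed.

Lemma fterm_lin k al p q : (k%:E <= f_infty f)%E ->
  (forall y, al + k * y <= f y) -> 0 <= p -> 0 <= q ->
  ((al * q + k * p)%:E <= fterm f p q)%E.
Proof.
move=> hk hf p0 q0; rewrite /fterm.
case: ifPn => qp.
  rewrite lee_fin; have := hf (p / q).
  move=> h; have := ler_wpM2l (ltW qp) h.
  have -> : q * (al + k * (p / q)) = al * q + k * p by field; rewrite gt_eqF.
  by [].
have -> : q = 0 by apply/eqP; rewrite eq_le q0 andbT leNgt.
case: eqP => [->|_]; first by rewrite !mulr0 addr0.
rewrite mulr0 add0r mulrC EFinM; exact: lee_wpmul2l.
Qed.

Lemma K_claim nu : is_pmf X nu -> a x < 1 -> a x <= nu x ->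
  (fdiv X f a (nul ((1 - nu x) / (1 - a x))) <= fdiv X f a nu)%E.
Proof.
move=> hnu c1 cnu.
have [nu0 _] := hnu.
have t1 : nu x <= 1 := pmf_le1 x hnu.
have hs1 := pmf_sum_le1 hnu.
have c1' : 0 < 1 - a x by lra.
set l := (1 - nu x) / (1 - a x).
have hl : 0 <= l <= 1.
  apply/andP; split; first by rewrite /l divr_ge0 //; lra.
  by rewrite /l ler_pdivrMr //; lra.
rewrite (Dsplit (nul_pmf _ hl)) (Dsplit hnu) sum_nul subrr mulr0 adde0.
rewrite !sume_sS_split.
have -> : nul l x = nu x by rewrite nul_x /l; field; apply/negP => /eqP; lra.
rewrite -addeA; apply: leeD2l.
have hsplit := sum_sS_split nu.
have hsx : 0 <= \sum_(z <- sS | z != x) nu z by apply: sumr_ge0 => z _; exact: nu0.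
have [t_eq1|t_lt1] := eqVneq (nu x) 1.
  have l0 : l = 0 by rewrite /l t_eq1 subrr mul0r.
  have r0 : 1 - \sum_(z <- sS) nu z = 0 by lra.
  rewrite r0 mulr0 adde0 big_seq_cond [leRHS]big_seq_cond.
  apply: lee_sum => z /andP[zs zx].
  rewrite nul_nx // l0 mul0r.
  have -> : nu z = 0; last by [].
  apply/eqP; rewrite eq_le nu0 andbT.
  have : nu z <= \sum_(y <- [seq y <- sS | y != x]) nu y.
    apply: sum_seq_ge => //; first by rewrite filter_uniq // sS_uniq.
    by rewrite mem_filter zx zs.
  rewrite big_filter; lra.
have tlt : nu x < 1 by rewrite lt_neqAle t_lt1 t1.
have l0 : 0 < l by rewrite /l divr_gt0 //; lra.
have [k hk] := @subgrad R f fc (l^-1).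
set al := f l^-1 - k * l^-1.
have hf : forall y, al + k * y <= f y by move=> y; have := hk y; rewrite /al; lra.
have hfi : (k%:E <= f_infty f)%E.
  by apply: (@finf_ge _ _ fc k al) => t _; have := hf t; lra.
have f0al : al <= f 0 by have := hf 0; rewrite mulr0 addr0.
apply: (@le_trans _ _ ((\sum_(z <- sS | z != x) (al * nu z + k * a z)) +
                      (al * (1 - \sum_(z <- sS) nu z)))%:E).
  have -> : \sum_(z <- sS | z != x) fterm f (a z) (nul l z) = ((1 - a x) * (l * f l^-1))%:E.
    rewrite -sum_a_nx mulr_suml -sumEFin; apply: eq_bigr => z zx.
    rewrite nul_nx // fterm_G ?Gp_lin //; first by rewrite mulr_ge0 // ?(ltW l0) ?a_ge0.
    have [az|az] := eqVneq (a z) 0; [by right|left].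
    by rewrite mulr_gt0 // lt_neqAle eq_sym az a_ge0.
  rewrite lee_fin big_split /= -!mulr_sumr sum_a_nx.
  have e1 : (1 - a x) * l = 1 - nu x by rewrite /l; field; apply/negP => /eqP; lra.
  have e2 : (1 - nu x) * l^-1 = 1 - a x.
    by rewrite /l invf_div mulrC divfK //; apply/negP => /eqP; lra.
  have e3 : k * l^-1 * (1 - nu x) = k * (1 - a x) by rewrite -e2; ring.
  have e4 : (1 - a x) * (l * f l^-1) = (1 - nu x) * f l^-1 by rewrite mulrA e1.
  rewrite e4 /al.
  have e5 : (f l^-1 - k * l^-1) * \sum_(i <- sS | i != x) nu i +
     k * (1 - a x) + (f l^-1 - k * l^-1) * (1 - \sum_(z <- sS) nu z) =
     (f l^-1 - k * l^-1) * (1 - nu x) + k * (1 - a x).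
    rewrite hsplit; ring.
  rewrite e5; lra.
rewrite EFinD; apply: leeD; last by rewrite lee_fin; apply: ler_wpM2r => //; lra.
rewrite -sumEFin; apply: lee_sum => z _; apply: fterm_lin => //; exact: a_ge0.
Qed.


Lemma psi_split l : 0 < l ->
  psi l = Gp (a x) (l * a x + (1 - l)) + (1 - a x) * (l * f l^-1).
Proof.
move=> l0; rewrite /psi sum_sS_split nul_x; congr (_ + _).
rewrite -sum_a_nx mulr_suml; apply: eq_bigr => z zx.
by rewrite nul_nx // Gp_lin.
Qed.

Lemma psi1 : psi 1 = 0.
Proof.
rewrite /psi big1_seq // => z _; rewrite /Gp.
have -> : nul 1 z = a z by rewrite /nul subrr mul0r addr0 mul1r.
have [->|az] := eqVneq (a z) 0; first by rewrite mul0r.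
by rewrite divff // f1 mulr0.
Qed.

Lemma Gp1 p : Gp p 1 = f p.
Proof. by rewrite /Gp divr1 mul1r. Qed.

Lemma Gp_lb p b : 0 < b <= 1 -> (2 - b) * Gp p 1 - (1 - b) * Gp p 2 <= Gp p b.
Proof.
move=> /andP[b0 b1].
have hb : 0 < 2 - b by lra.
pose th := (2 - b)^-1.
have th0 : 0 <= th <= 1.
  apply/andP; split; first by rewrite /th invr_ge0 ltW.
  by rewrite /th invf_le1 //; lra.
have := @Gp_conv p b 2 th (or_intror (conj b0 (ltr0Sn _ 1))) th0.
have -> : th * b + (1 - th) * 2 = 1.
  rewrite /th; field; apply/negP => /eqP; lra.
move=> h; have := ler_wpM2l (ltW hb) h.
have -> : (2 - b) * (th * Gp p b + (1 - th) * Gp p 2) = Gp p b + (1 - b) * Gp p 2.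
  rewrite /th; field; apply/negP => /eqP; lra.
lra.
Qed.

Lemma finf_bound e : a x < 1 -> (forall l, 0 < l <= 1 -> psi l <= e) ->
  (f_infty f <= ((e - f (a x)) / (1 - a x))%:E)%E.
Proof.
move=> c1 H.
have c1' : 0 < 1 - a x by lra.
apply: (@finf_le _ _ fc _ (Gp (a x) 2 - f (a x)) 2) => t t2.
have t0 : 0 < t by lra.
have hl : 0 < t^-1 <= 1.
  by apply/andP; split; [rewrite invr_gt0|rewrite invf_le1 //; lra].
have := H _ hl; rewrite psi_split ?invr_gt0 // invrK.
set b := t^-1 * a x + (1 - t^-1).
have hb : 0 < b <= 1.
  rewrite /b; apply/andP; split.
    have : 0 <= t^-1 * a x by rewrite mulr_ge0 ?invr_ge0 ?(ltW t0) // a_ge0.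
    have : t^-1 <= 2^-1 by rewrite lef_pV2 ?posrE //.
    have : (2:R)^-1 < 1 by rewrite invf_lt1 //; lra.
    lra.
  have := a_le1 x; rewrite /b.
  have : 0 <= t^-1 by rewrite invr_ge0 ltW.
  nra.
have := Gp_lb (a x) _ hb; rewrite Gp1.
move=> hlb hp.
have e1 : 1 - b = t^-1 * (1 - a x) by rewrite /b; ring.
have e2 : 2 - b = 1 + t^-1 * (1 - a x) by rewrite /b; ring.
rewrite e1 e2 in hlb.
have h3 : (1 - a x) * (t^-1 * f t) <= e - f (a x) + t^-1 * (1 - a x) * (Gp (a x) 2 - f (a x)).
  lra.
have h4 := ler_wpM2l (ltW t0) h3.
have e3 : t * ((1 - a x) * (t^-1 * f t)) = (1 - a x) * f t.
  by field; apply/negP => /eqP; lra.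
have e4 : t * (e - f (a x) + t^-1 * (1 - a x) * (Gp (a x) 2 - f (a x))) =
  (1 - a x) * ((e - f (a x)) / (1 - a x) * t + (Gp (a x) 2 - f (a x))).
  by field; apply/andP; split; apply/negP => /eqP; lra.
rewrite e3 e4 in h4.
by rewrite -(ler_pM2l c1').
Qed.


Lemma main_exists eps : 0 <= eps -> exists l, 0 <= l <= 1 /\
  fball X f a eps (nul l) /\ sup [set nu x | nu in fball X f a eps] = nul l x.
Proof.
move=> eps0.
have h01 : 0 <= (1:R) <= 1 by rewrite ler01 lexx.
have h11 : 0 < (1:R) <= 1 by rewrite ltr01 lexx.
have B1 : fball X f a eps (nul 1).
  split; first exact: nul_pmf.
  by rewrite (D_nul _ h11) psi1 lee_fin.
have nul1x : nul 1 x = a x by rewrite nul_x mul1r subrr addr0.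
have hsup : has_sup [set nu x | nu in fball X f a eps].
  split; first by exists (nul 1 x), (nul 1).
  by exists 1 => _ [nu [hnu _] <-]; exact: pmf_le1.
set ts := sup _.
have ts_ge : a x <= ts.
  by rewrite -nul1x; apply: sup_upper_bound => //; exists (nul 1).
have ts_le : ts <= 1.
  apply: ge_sup; first by exists (nul 1 x), (nul 1).
  by move=> _ [nu [hnu _] <-]; exact: pmf_le1.
have [c1|c1] := eqVneq (a x) 1.
  exists 1; split => //; split => //; rewrite nul1x c1.
  by apply/eqP; rewrite eq_le ts_le -c1 ts_ge.
have cl1 : a x < 1 by rewrite lt_neqAle c1 a_le1.
have c1' : 0 < 1 - a x by lra.
have c1n : 1 - a x != 0 by apply/negP => /eqP; lra.
set ls := (1 - ts) / (1 - a x).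
have els : ls * (1 - a x) = 1 - ts by rewrite /ls divfK.
have hls : 0 <= ls <= 1.
  apply/andP; split; first by rewrite /ls divr_ge0 //; lra.
  by rewrite /ls ler_pdivrMr //; lra.
have nlx : nul ls x = ts.
  rewrite nul_x; have : ls * a x + (1 - ls) = 1 - ls * (1 - a x) by ring.
  by move=> ->; rewrite els; ring.
exists ls; split => //; split; last by rewrite nlx.
split; first exact: nul_pmf.
have Lam : forall d, 0 < d -> exists l, [/\ ls <= l, l < ls + d, 0 <= l <= 1 &
    (fdiv X f a (nul l) <= eps%:E)%E].
  move=> d d0.
  have [_ [nu Bnu <-] hnu] := sup_adherent (mulr_gt0 d0 c1') hsup.
  rewrite -/ts in hnu.
  have nts : nu x <= ts by apply: sup_upper_bound => //; exists nu.
  have nu1 : nu x <= 1 by apply: pmf_le1; case: Bnu.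
  case: (ltP (nu x) (a x)) => hc.
    exists 1; split => //; [by case/andP: hls| |by case: B1].
    by rewrite -(ltr_pM2r c1') mul1r mulrDl els; lra.
  set l := (1 - nu x) / (1 - a x).
  have el : l * (1 - a x) = 1 - nu x by rewrite /l divfK.
  exists l; split.
  - by rewrite -(ler_pM2r c1') els el; lra.
  - by rewrite -(ltr_pM2r c1') mulrDl els el; lra.
  - apply/andP; split; first by rewrite /l divr_ge0 //; lra.
    by rewrite /l ler_pdivrMr //; lra.
  - case: Bnu => hpmf hD; exact: le_trans (K_claim _ hpmf cl1 hc) hD.
have [ls0|ls0] := eqVneq ls 0.
  rewrite ls0.
  have [//|hn] := boolP (fdiv X f a (nul 0) <= eps%:E)%E.
  have all_l : forall l', 0 < l' <= 1 -> psi l' <= eps.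
    move=> l' /andP[l'0 l'1].
    have [l [h1 h2 /andP[h3 _] h4]] := Lam l' l'0.
    rewrite ls0 add0r in h1 h2.
    have lpos : 0 < l.
      rewrite lt_neqAle h3 andbT; apply/negP => /eqP l0.
      by move: hn; rewrite l0 h4.
    have l1 : l < 1 by lra.
    have hl : 0 < l <= 1 by rewrite lpos ltW.
    have psil : psi l <= eps by move: h4; rewrite (D_nul _ hl) lee_fin.
    pose th := (1 - l') / (1 - l).
    have th01 : 0 <= th <= 1.
      apply/andP; split; first by rewrite /th divr_ge0 //; lra.
      by rewrite /th ler_pdivrMr; lra.
    have := psi_conv _ _ _ hl h11 th01.
    have -> : th * l + (1 - th) * 1 = l'.
      by rewrite /th; field; apply/negP => /eqP; lra.
    rewrite psi1 mulr0 addr0 => h.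
    apply: le_trans h _.
    have /andP[th0 th1] := th01.
    have : th * psi l <= th * eps by apply: ler_wpM2l.
    nra.
  have fb := finf_bound _ cl1 all_l.
  suff : (fdiv X f a (nul 0) <= eps%:E)%E by rewrite (negbTE hn).
  rewrite D_nul0.
  apply: le_trans (leeD2l _ (lee_wpmul2l _ fb)) _; first by rewrite lee_fin; lra.
  rewrite -EFinM -EFinD lee_fin.
  have -> : (1 - a x) * ((eps - f (a x)) / (1 - a x)) = eps - f (a x).
    by rewrite mulrC divfK.
  lra.
have lsp : 0 < ls by rewrite lt_neqAle eq_sym ls0; case/andP: hls.
have hls' : 0 < ls <= 1 by rewrite lsp; case/andP: hls.
rewrite (D_nul _ hls') lee_fin.
pose p := ls / 2.
have hp : 0 < p <= 1 by rewrite /p; apply/andP; split; case/andP: hls => _; lra.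
pose Dp := `|psi p - eps| + 1.
have Dp0 : 0 < Dp by rewrite /Dp ltr_pwDr.
have Dpge : psi p - eps <= Dp by rewrite /Dp; have := ler_norm (psi p - eps); lra.
apply/ler_addgt0Pr => e e0.
have dpos : 0 < e * ls / (2 * Dp) by apply: divr_gt0; apply: mulr_gt0 => //; lra.
have [l [h1 h2 /andP[h3 h4'] h4]] := Lam _ dpos.
have [leq|lneq] := eqVneq l ls.
  by move: h4; rewrite -leq (D_nul _ (_ : 0 < l <= 1)) ?lee_fin; [lra|rewrite leq].
have lgt : ls < l by rewrite lt_neqAle eq_sym lneq h1.
have hl : 0 < l <= 1 by rewrite h4' andbT; lra.
have psil : psi l <= eps by move: h4; rewrite (D_nul _ hl) lee_fin.
have lp : 0 < l - p by rewrite /p; lra.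
pose th := (l - ls) / (l - p).
have hth : th * (l - p) = l - ls by rewrite /th divfK // gt_eqF.
have th0 : 0 <= th by rewrite /th divr_ge0 //; lra.
have th1 : th <= 1 by rewrite /th ler_pdivrMr //; rewrite /p; lra.
have := psi_conv _ _ _ hp hl (_ : 0 <= th <= 1); rewrite th0 th1 => /(_ isT).
have -> : th * p + (1 - th) * l = ls.
  have : th * p = th * l - (l - ls) by rewrite -hth; ring.
  move=> ->; ring.
move=> hconv.
have hthD : th * Dp <= e.
  have h5 : th * (ls / 2) <= l - ls.
    rewrite -hth; apply: ler_wpM2l => //; rewrite /p; lra.
  have h6 : l - ls < e * ls / (2 * Dp) by lra.
  have h7 : th * (ls / 2) < e * ls / (2 * Dp) by lra.
  have e7 : e * ls / (2 * Dp) = (e / Dp) * (ls / 2).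
    by field; apply/negP => /eqP; lra.
  rewrite e7 ltr_pM2r in h7; last by lra.
  by rewrite -ler_pdivlMr //; apply: ltW.
have : (1 - th) * psi l <= (1 - th) * eps by apply: ler_wpM2l; lra.
have : th * (psi p - eps) <= th * Dp by apply: ler_wpM2l.
nra.
Qed.

End basics.

Theorem mainTheorem11 (R : realType) (m N : nat) (X : set 'rV[R]_m)
  (xhat : 'I_N -> 'rV[R]_m) (w : 'I_N -> R) (f : R -> R) (eps : R)
  (x : 'rV[R]_m) :
  countable X ->
  injective xhat ->
  (forall j, X (xhat j)) ->
  (forall j, 0 < w j) ->
  \sum_(j < N) w j = 1 ->
  convex_fun f ->
  f 1 = 0 ->
  0 <= eps ->
  X x ->
  exists nustar : 'rV[R]_m -> R,
    fball X f (empirical xhat w) eps nustar /\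
    sup [set nu x | nu in fball X f (empirical xhat w) eps] = nustar x /\
    (exists s : seq 'rV[R]_m,
        (size s <= N.+1)%N /\ [set z | nustar z != 0] `<=` [set z | z \in s]) /\
    [set z | nustar z != 0] `<=` (range xhat `|` [set x]).
Proof.
move=> cX xinj Xxh w0 w1 fc f1 eps0 Xx.
have [l [hl [hB hsup]]] := @main_exists R m N X xhat w x f fc f1 Xxh w0 w1 Xx eps eps0.
have supp : forall z, nul R m N xhat w x l z != 0 -> z \in sS R m N xhat x.
  move=> z nz; case: (boolP (z \in sS R m N xhat x)) => // zs.
  by rewrite nul_out ?eqxx in nz.
exists (nul R m N xhat w x l); split => //; split => //; split.
  exists (sS R m N xhat x); split; first exact: size_sS.
  by move=> z /= nz; exact: supp.
move=> z /= nz; case: (@sS_cases R m N xhat x z (supp z nz)) => [->|[j ->]].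
  by right.
by left; exists j.
Qed.
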